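(* Let $\bm\Phi\in\mathbb{R}^{N\times N}$, and for hyperparameters $\bm\beta\in B$ let $\mathcal{O}_{\bm\beta}\in\mathbb{R}^{N\times N}$ be symmetric positive definite, with $\mathbf{K}_{\bm\beta}=\bm\Phi\mathcal{O}_{\bm\beta}\bm\Phi^\top$. Parametrize $\bm\rho=(\tilde\gamma,\bm\beta,\sigma^2)\in(0,\infty)\times B\times(0,\infty)$ with $\tilde\gamma=\gamma\sigma^2$, and set $\mathbf{S}_{\bm\rho}=\mathbf{K}_{\bm\beta}/\gamma+\sigma^2\mathbf{I}$. Let $\bar{\mathbf{Q}}\in\mathbb{R}^{N\times N}$ be symmetric positive definite. Take factorizations $\mathcal{O}_{\bm\beta}/\tilde\gamma=\mathbf{L}_{\bm\rho}\mathbf{L}_{\bm\rho}^\top$ and $\bar{\mathbf{Q}}=\mathbf{C}\mathbf{C}^\top$ with $\mathbf{L}_{\bm\rho},\mathbf{C}$ triangular with positive diagonal, and a QR factorization $$\begin{bmatrix}\bm\Phi\mathbf{L}_{\bm\rho}&\mathbf{C}\\ \mathbf{I}&\mathbf{0}\end{bmatrix}=\mathbf{Q}_{\bm\rho}\begin{bmatrix}\mathbf{R}_{1,\bm\rho}&\mathbf{R}_{2,\bm\rho}\\ \mathbf{0}&\mathbf{R}_{3,\bm\rho}\end{bmatrix},$$ with $\mathbf{Q}_{\bm\rho}$ orthogonal and $\mathbf{R}_{1,\bm\rho},\mathbf{R}_{3,\bm\rho}\in\mathbb{R}^{N\times N}$ upper triangular with positive diagonal ($\mathbf{R}_{1,\bm\rho},\mathbf{R}_{2,\bm\rho}$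 depend only on $(\tilde\gamma,\bm\beta)$). Then $\|\mathbf{C}\|_F^2-\|\mathbf{R}_{2,\bm\rho}\|_F^2>0$, and $(\tilde\gamma^*,\bm\beta^*,\sigma^{2*})$ minimizes $f(\bm\rho)=\log\det(\mathbf{S}_{\bm\rho})+\mathrm{tr}\{\mathbf{S}_{\bm\rho}^{-1}\bar{\mathbf{Q}}\}$ over $(0,\infty)\times B\times(0,\infty)$ if and only if $$(\tilde\gamma^*,\bm\beta^* )\in\arg\min_{\tilde\gamma>0,\bm\beta\in B}\Big(N\log\big(\|\mathbf{C}\|_F^2-\|\mathbf{R}_{2,\bm\rho}\|_F^2\big)+2\log\det(\mathbf{R}_{1,\bm\rho})\Big)$$ and $\sigma^{2*}=\frac1N\big(\|\mathbf{C}\|_F^2-\|\mathbf{R}_{2,\bm\rho^*}\|_F^2\big)$.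
   Context: $\|\cdot\|_F$ denotes the Frobenius norm. In the paper, $\bar{\mathbf{Q}}$ is the conditional second moment $\bar{\mathbf{Q}}^{(j)}$ of the unquantized output at the current EM iterate, and the claim gives an equivalent form of the EM M-step $\arg\min_{\bm\rho}(\log\det\mathbf{S}_{\bm\rho}+\mathrm{tr}\{\mathbf{S}_{\bm\rho}^{-1}\bar{\mathbf{Q}}^{(j)}\})$ for Empirical Bayes hyperparameter estimation. *)

(* Defs.v *)
From mathcomp Require Import all_boot all_order all_algebra.
From mathcomp Require Import all_classical all_reals all_analysis.
Set Implicit Arguments. Unset Strict Implicit. Unset Printing Implicit Defensive.
Import Order.TTheory GRing.Theory Num.Theory.
Local Open Scope ring_scope.

Section Defs.
Variable R : realType.

Definition spd n (A : 'M[R]_n) : Prop :=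
  A^T = A /\ forall x : 'cV[R]_n, x != 0 -> 0 < (x^T *m A *m x) ord0 ord0.

Definition trig_posdiag n (A : 'M[R]_n) : Prop :=
  (is_trig_mx A \/ is_trig_mx A^T) /\ forall i, 0 < A i i.

Definition upper_posdiag n (A : 'M[R]_n) : Prop :=
  is_trig_mx A^T /\ forall i, 0 < A i i.

Definition orthogonal_mx n (Q : 'M[R]_n) : Prop := Q^T *m Q = 1%:M.

Definition frob m n (A : 'M[R]_(m, n)) : R :=
  Num.sqrt (\sum_i \sum_j A i j ^+ 2).

(* S_rho with gamma = gt / s2, i.e. K/gamma + s2 I *)
Definition Smat n (K : 'M[R]_n) (gt s2 : R) : 'M[R]_n :=
  (gt / s2)^-1 *: K + s2%:M.

Definition emf n (K Qbar : 'M[R]_n) (gt s2 : R) : R :=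
  ln (\det (Smat K gt s2)) + \tr (invmx (Smat K gt s2) *m Qbar).

End Defs.

(* Main.v *)
Require Import Defs.
From mathcomp Require Import all_boot all_order all_algebra.
From mathcomp Require Import all_classical all_reals all_analysis.
From mathcomp Require Import ring lra.
Import Order.TTheory GRing.Theory Num.Theory.
Set Implicit Arguments. Unset Strict Implicit. Unset Printing Implicit Defensive.
Local Open Scope ring_scope.
Lemma sig_opt (R : realType) (n c s : R) : 0 < n -> 0 < c -> 0 < s ->
  n * ln (c/n) + n <= n * ln s + c/s /\
  (n * ln s + c/s <= n * ln (c/n) + n -> s = c/n).
Proof.
move=> n0 c0 s0.
set t := c / (n * s).
have t0 : 0 < t by rewrite /t divr_gt0 // mulr_gt0.
have e1 : c / n = t * s by rewrite /t; field; rewrite !gt_eqF.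
have e2 : c / s = n * t by rewrite /t; field; rewrite !gt_eqF.
rewrite e1 e2 lnM ?posrE //.
have tK : expR (ln t) = t by rewrite lnK ?posrE.
have H := expR_ge1Dx (ln t); rewrite tK in H.
split.

  rewrite -Num.Theory.subr_ge0.
  have -> : n * ln s + n * t - (n * (ln t + ln s) + n) = n * (t - 1 - ln t) by ring.
  apply: mulr_ge0; [exact: ltW|]; lra.
move=> Hle.
have Hl : ln t = 0.
  apply/eqP; apply/negPn/negP => Hn.
  have H2 := expR_gt1Dx Hn; rewrite tK in H2.
  move: Hle; rewrite -Num.Theory.subr_ge0.
  have -> : n * (ln t + ln s) + n - (n * ln s + n * t) = - (n * (t - 1 - ln t)) by ring.
  rewrite oppr_ge0 leNgt mulr_gt0 //; lra.
have t1 : t = 1 by rewrite -tK Hl expR0.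
by rewrite t1 mul1r.
Qed.
Section LA.
Variable R : realType.

Lemma frob2 m n (A : 'M[R]_(m, n)) : frob A ^+ 2 = \tr (A^T *m A).
Proof.
rewrite /frob sqr_sqrtr; last by apply: sumr_ge0 => i _; apply: sumr_ge0 => j _; exact: sqr_ge0.
rewrite /mxtrace; under [RHS]eq_bigr do rewrite mxE.
rewrite exchange_big; apply: eq_bigr => i _; apply: eq_bigr => j _.
by rewrite !mxE expr2.
Qed.

Lemma sylv n (A B : 'M[R]_n) : \det (1%:M + A *m B) = \det (1%:M + B *m A).
Proof.
have e1 : block_mx (1%:M + A *m B) (- A) 0 1%:M *m block_mx 1%:M 0 B 1%:M
          = block_mx 1%:M (- A) B 1%:M.
  rewrite mulmx_block ?mulmx1 ?mul1mx ?mulmx0 ?mul0mx ?addr0 ?add0r.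
  by rewrite mulNmx addrK.
have e2 : block_mx 1%:M 0 B 1%:M *m block_mx 1%:M (- A) 0 (1%:M + B *m A)
          = block_mx 1%:M (- A) B 1%:M.
  rewrite mulmx_block ?mulmx1 ?mul1mx ?mulmx0 ?mul0mx ?addr0 ?add0r.
  by rewrite mulmxN addrC addrK.
have := congr1 determinant e2; rewrite -e1 !det_mulmx ?det_ublock ?det_lblock ?det1.
by rewrite !mul1r !mulr1 => ->.

Qed.

Lemma qr_blocks n (Q : 'M[R]_(n + n)) (A C R1 R2 R3 : 'M[R]_n) :
  Q^T *m Q = 1%:M ->
  block_mx A C 1%:M 0 = Q *m block_mx R1 R2 0 R3 ->
  [/\ R1^T *m R1 = A^T *m A + 1%:M, R1^T *m R2 = A^T *m C &
      R2^T *m R2 + R3^T *m R3 = C^T *m C].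
Proof.
move=> oQ E.
have : (block_mx A C 1%:M 0)^T *m block_mx A C 1%:M 0
   = (block_mx R1 R2 0 R3)^T *m block_mx R1 R2 0 R3.
  by rewrite E trmx_mul mulmxA -(mulmxA _ Q^T) oQ mulmx1.
rewrite !tr_block_mx !mulmx_block !trmx0 trmx1 ?mulmx1 ?mul1mx ?mulmx0 ?mul0mx ?addr0 ?add0r.
by case/eq_block_mx => -> -> _ ->.
Qed.

Lemma tr_inv n (A C R1 R2 : 'M[R]_n) : R1 \in unitmx ->
  R1^T *m R1 = A^T *m A + 1%:M -> R1^T *m R2 = A^T *m C ->
  \tr (invmx (1%:M + A *m A^T) *m (C *m C^T)) = \tr (C^T *m C) - \tr (R2^T *m R2).
Proof.
move=> uR h1 h2.
have uRT : R1^T \in unitmx by rewrite unitmx_tr.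
pose W := invmx R1 *m invmx R1^T.
have hW : (A^T *m A + 1%:M) *m W = 1%:M.
  by rewrite -h1 /W mulmxA -(mulmxA R1^T) mulmxV // mulmx1 mulmxV.
pose X := 1%:M - A *m W *m A^T.
have hX : (1%:M + A *m A^T) *m X = 1%:M.
  have eA : (1%:M + A *m A^T) *m A = A *m (A^T *m A + 1%:M).
    by rewrite mulmxDl mulmxDr mul1mx mulmx1 mulmxA addrC.
  have hW' : (A^T *m A + 1%:M) *m invmx R1 *m invmx R1^T = 1%:M by rewrite -mulmxA.
  rewrite /X mulmxBr mulmx1 !mulmxA eA -(mulmxA A (A^T *m A + 1%:M)) -(mulmxA A) hW' mulmx1.
  by rewrite addrK.
have Xinv : invmx (1%:M + A *m A^T) = X.
  have [u _] := mulmx1_unit hX.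
  have := congr1 (mulmx (invmx (1%:M + A *m A^T))) hX.
  by rewrite mulmxA mulVmx // mul1mx mulmx1 => <-.
have h2' : C^T *m A = R2^T *m R1.
  by rewrite -[LHS]trmxK trmx_mul trmxK -h2 trmx_mul trmxK.
have key : C^T *m (A *m W *m A^T) *m C = R2^T *m R2.
  rewrite !mulmxA h2' /W -(mulmxA (R2^T) R1) mulmxV // mulmx1.
  by rewrite -!mulmxA -h2 (mulmxA (invmx R1^T)) mulVmx // mul1mx.
rewrite Xinv mulmxA mxtrace_mulC mulmxA /X mulmxBr mulmx1 mulmxBl key.
by rewrite linearB.
Qed.

Lemma frob_pos n (A : 'M[R]_n) i0 : 0 < A i0 i0 -> 0 < frob A ^+ 2.
Proof.
move=> hA; rewrite /frob sqr_sqrtr; last by apply: sumr_ge0 => i _; apply: sumr_ge0 => j _; exact: sqr_ge0.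
apply: (@lt_le_trans _ _ (A i0 i0 ^+ 2)); first exact: exprn_gt0.
rewrite (bigD1 i0) //= (bigD1 i0) //= -addrA lerDl.
apply: addr_ge0; first by apply: sumr_ge0 => j _; exact: sqr_ge0.
by apply: sumr_ge0 => i _; apply: sumr_ge0 => j _; exact: sqr_ge0.
Qed.

Lemma det_up_pos n (A : 'M[R]_n) : upper_posdiag A -> 0 < \det A.
Proof.
case=> tA dA; rewrite -det_tr det_trig //.
by apply: prodr_gt0 => i _; rewrite mxE.
Qed.

Lemma c_pos n (C R2 R3 : 'M[R]_n) (i0 : 'I_n) : upper_posdiag R3 ->
  R2^T *m R2 + R3^T *m R3 = C^T *m C ->
  frob C ^+ 2 - frob R2 ^+ 2 = frob R3 ^+ 2 /\ 0 < frob C ^+ 2 - frob R2 ^+ 2.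
Proof.
move=> [_ d3] h3.
have e : frob C ^+ 2 - frob R2 ^+ 2 = frob R3 ^+ 2.
  rewrite !frob2 -h3 linearD /=; ring.
by rewrite e; split => //; exact: (frob_pos (d3 i0)).
Qed.

Lemma f_eq n (Phi O Qbar C L R1 R2 R3 : 'M[R]_n) (Q : 'M[R]_(n + n)) (gt s2 : R) :
  0 < gt -> 0 < s2 -> Qbar = C *m C^T -> gt^-1 *: O = L *m L^T ->
  Q^T *m Q = 1%:M -> upper_posdiag R1 ->
  block_mx (Phi *m L) C 1%:M 0 = Q *m block_mx R1 R2 0 R3 ->
  emf (Phi *m O *m Phi^T) Qbar gt s2
   = n%:R * ln s2 + 2 * ln (\det R1) + (frob C ^+ 2 - frob R2 ^+ 2) / s2.
Proof.
move=> gt0 s0 hQb eqL oQ u1 E.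
set A := Phi *m L.
have [h1 h2 h3] := qr_blocks oQ E.
have d0 := det_up_pos u1.
have uR : R1 \in unitmx by rewrite unitmxE unitfE gt_eqF.
have hO : O = gt *: (L *m L^T) by rewrite -eqL scalerA mulfV ?gt_eqF // scale1r.
have hS : Smat (Phi *m O *m Phi^T) gt s2 = s2 *: (1%:M + A *m A^T).
  have es : (gt / s2)^-1 * gt = s2 by field; rewrite !gt_eqF.
  rewrite /Smat hO -scalemxAr -scalemxAl scalerA es scalerDr scalemx1 addrC.
  by rewrite /A trmx_mul !mulmxA.
have hdet : \det (Smat (Phi *m O *m Phi^T) gt s2) = s2 ^+ n * (\det R1 * \det R1).
  by rewrite hS detZ sylv addrC -h1 det_mulmx det_tr.
have uP : (1%:M + A *m A^T) \in unitmx.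
  rewrite unitmxE unitfE sylv addrC -h1 det_mulmx det_tr.
  by rewrite mulf_neq0 // gt_eqF.
rewrite /emf hdet lnM ?posrE ?exprn_gt0 ?mulr_gt0 // lnXn // lnM ?posrE //.
rewrite hS invmxZ; last first.
  rewrite unitmxE unitfE detZ mulf_neq0 ?expf_neq0 ?gt_eqF //.
  by rewrite sylv addrC -h1 det_mulmx det_tr mulr_gt0.
rewrite -(scalemxAl (s2^-1)) mxtraceZ hQb (tr_inv uR h1 h2) -!frob2 -mulr_natl.
field.
by rewrite gt_eqF.
Qed.

End LA.

Theorem theorem3 (R : realType) (N : nat) (B : Type)
  (Phi : 'M[R]_N) (O : B -> 'M[R]_N) (Qbar C : 'M[R]_N)
  (L : R -> B -> 'M[R]_N) (Q : R -> B -> 'M[R]_(N + N))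
  (R1 R2 R3 : R -> B -> 'M[R]_N) :
  (0 < N)%N ->
  (forall beta, spd (O beta)) ->
  spd Qbar ->
  trig_posdiag C -> Qbar = C *m C^T ->
  (forall gt beta, 0 < gt ->
     trig_posdiag (L gt beta) /\ gt^-1 *: O beta = L gt beta *m (L gt beta)^T) ->
  (forall gt beta, 0 < gt ->
     orthogonal_mx (Q gt beta) /\
     upper_posdiag (R1 gt beta) /\ upper_posdiag (R3 gt beta) /\
     block_mx (Phi *m L gt beta) C 1%:M 0
       = Q gt beta *m block_mx (R1 gt beta) (R2 gt beta) 0 (R3 gt beta)) ->
  let K := fun beta => Phi *m O beta *m Phi^T in
  let f := fun gt beta s2 => emf (K beta) Qbar gt s2 in
  let g := fun gt beta =>
    N%:R * ln (frob C ^+ 2 - frob (R2 gt beta) ^+ 2) + 2 * ln (\det (R1 gt beta)) in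
  (forall gt beta, 0 < gt -> 0 < frob C ^+ 2 - frob (R2 gt beta) ^+ 2) /\
  (forall gts betas s2s, 0 < gts -> 0 < s2s ->
     ((forall gt beta s2, 0 < gt -> 0 < s2 -> f gts betas s2s <= f gt beta s2)
      <->
      ((forall gt beta, 0 < gt -> g gts betas <= g gt beta) /\
       s2s = N%:R^-1 * (frob C ^+ 2 - frob (R2 gts betas) ^+ 2)))).
Proof.
move=> N0 _ _ _ eQ hL hQ K f g.
pose c gt beta := frob C ^+ 2 - frob (R2 gt beta) ^+ 2.
have key : forall gt beta, 0 < gt -> 0 < c gt beta /\ forall s2, 0 < s2 ->
    f gt beta s2 = N%:R * ln s2 + 2 * ln (\det (R1 gt beta)) + c gt beta / s2.
  move=> gt beta gt0; have [tL eL] := hL _ beta gt0; have [oQ [u1 [u3 E]]] := hQ _ beta gt0.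
  have [h1 h2 h3] := qr_blocks oQ E.
  split; first exact: (c_pos (Ordinal N0) u3 h3).2.
  move=> s2 s0; rewrite /f /K; exact: f_eq gt0 s0 eQ eL oQ u1 E.
split; first by move=> gt beta gt0; exact: (key _ beta gt0).1.
set n : R := N%:R.
have n0 : 0 < n by rewrite ltr0n.
pose m := n - n * ln n.
have rel : forall gt beta s, 0 < gt -> 0 < s ->
    f gt beta s - (g gt beta + m) = (n * ln s + c gt beta / s) - (n * ln (c gt beta / n) + n).
  move=> gt beta s gt0 s0; have [cp fe] := key _ beta gt0.
  rewrite fe // /g -/n -/(c gt beta) ln_div ?posrE // /m; ring.
have fge : forall gt beta s, 0 < gt -> 0 < s -> g gt beta + m <= f gt beta s.
  move=> gt beta s gt0 s0; rewrite -Num.Theory.subr_ge0 rel // Num.Theory.subr_ge0.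
  exact: (sig_opt n0 (key _ beta gt0).1 s0).1.
have fun1 : forall gt beta s, 0 < gt -> 0 < s -> f gt beta s <= g gt beta + m ->
    s = c gt beta / n.
  move=> gt beta s gt0 s0; rewrite -Num.Theory.subr_le0 rel // Num.Theory.subr_le0.
  exact: (sig_opt n0 (key _ beta gt0).1 s0).2.
have feq : forall gt beta, 0 < gt -> f gt beta (c gt beta / n) = g gt beta + m.
  move=> gt beta gt0; have cp := (key _ beta gt0).1.
  have s0 : 0 < c gt beta / n by rewrite divr_gt0.
  apply/eqP; rewrite eq_le fge // andbT -Num.Theory.subr_le0 rel //.
  have -> : c gt beta / (c gt beta / n) = n by field; rewrite !gt_eqF.
  by rewrite subrr.
move=> gts betas s2s gts0 s2s0; split.
  move=> H.
  have cp := (key _ betas gts0).1.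
  have hs : s2s = c gts betas / n.
    apply: fun1 => //; rewrite -(feq _ _ gts0); apply: H => //; exact: divr_gt0.
  split; last by rewrite hs mulrC.
  move=> gt beta gt0.
  have cp' := (key _ beta gt0).1.
  have H1 := H gt beta (c gt beta / n) gt0 (divr_gt0 cp' n0).
  rewrite feq // in H1.
  have H2 := fge gts betas s2s gts0 s2s0.
  have := le_trans H2 H1; lra.
move=> [Hg Hs] gt beta s2 gt0 s0.
have -> : s2s = c gts betas / n by rewrite Hs mulrC.
rewrite feq //; have := fge gt beta s2 gt0 s0; have := Hg _ beta gt0; lra.
Qed.
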